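(* Let $m \geq 13$ be an odd integer. The digraph $L_{2m}$ admits a $\vec{C}_m$-factorization if and only if $3 \nmid m$.
   Context: $L_{2m} = \vec{X}(m,\{1,3\}) \wr \overline{K}_2$ is the digraph with vertex set $\{x_a, y_a : a \in \mathbb{Z}_m\}$ whose arcs are exactly $(u_a, v_b)$ for all $u, v \in \{x,y\}$ and all $a,b \in \mathbb{Z}_m$ with $b - a \equiv 1$ or $b-a \equiv 3 \pmod m$. A $\vec{C}_m$-factor of a digraph is a spanning subdigraph that is a disjoint union of directed $m$-cycles; a $\vec{C}_m$-factorization is a partition of the arc set into $\vec{C}_m$-factors. *)

(* Defs.v *)
From mathcomp Require Import all_boot.
Set Implicit Arguments. Unset Strict Implicit. Unset Printing Implicit Defensive.

Section Digraphs.
Variable T : finType.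

Definition arcset (D : rel T) : {set T * T} := [set p | D p.1 p.2].

Definition is_dicycle (D : rel T) (k : nat) (c : seq T) : Prop :=
  [/\ size c = k, uniq c & cycle D c].

Definition dicycle_arcs (c : seq T) : {set T * T} :=
  [set p | (p.1 \in c) && (p.2 == next c p.1)].

Definition Ck_factor (D : rel T) (k : nat) (F : {set T * T}) : Prop :=
  exists cs : seq (seq T),
    [/\ forall c, c \in cs -> is_dicycle D k c,
        forall v : T, count (fun c => v \in c) cs = 1 &
        F = \bigcup_(c <- cs) dicycle_arcs c].

Definition Ck_factorization (D : rel T) (k : nat) : Prop :=
  exists P : {set {set T * T}},
    partition P (arcset D) /\ forall F, F \in P -> Ck_factor D k F.
End Digraphs.

(* L_{2m} = X(m,{1,3}) wr K_2-bar: vertices (a, false) = x_a, (a, true) = y_a,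
   a in Z_m (represented by 'I_m); arcs (u_a, v_b) iff b - a = 1 or 3 mod m. *)
Definition Lvert (m : nat) : finType := ('I_m * bool)%type.

Definition Larc (m : nat) : rel (Lvert m) :=
  fun u v => ((v.1 : nat) == (u.1 + 1) %% m) || ((v.1 : nat) == (u.1 + 3) %% m).

(* Main.v *)
Require Import Defs.
From mathcomp Require Import all_boot zify.
Set Implicit Arguments. Unset Strict Implicit. Unset Printing Implicit Defensive.

Lemma next_nth_uniq (T : eqType) (c : seq T) (x0 : T) i :
  uniq c -> i < size c -> next c (nth x0 c i) = nth x0 c (i.+1 %% size c).
Proof.
move=> Uc lti; rewrite next_nth mem_nth // index_uniq //.
case: c Uc lti => [//|y p] Uc /= lti; rewrite ltnS in lti.
case: (ltngtP i (size p)) lti => [lt|//|eq] _.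
  by rewrite modn_small ?ltnS //= (set_nth_default x0).
by rewrite eq modnn /= nth_default ?eq.
Qed.

Definition om (m : nat) (Hm : 0 < m) (k : nat) : 'I_m := Ordinal (ltn_pmod k Hm).

Definition walk (m : nat) (Hm : 0 < m) (s : nat) (l : nat -> bool) : seq (Lvert m) :=
  [seq (om Hm (s * k), l ((s * k) %% m)) | k <- iota 0 m].

Lemma walk_size m Hm s l : size (@walk m Hm s l) = m.
Proof. by rewrite size_map size_iota. Qed.

Lemma walk_nth m Hm s l x0 k : k < m ->
  nth x0 (@walk m Hm s l) k = (om Hm (s * k), l ((s * k) %% m)).
Proof. by move=> km; rewrite (nth_map 0) ?size_iota // nth_iota. Qed.

Lemma mod_inj m s i j : coprime s m -> i < m -> j < m -> (s * i) %% m = (s * j) %% m -> i = j.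
Proof.
move=> cop im jm.
wlog ij : i j im jm / i <= j.
  move=> H; case: (leqP i j) => [|/ltnW] h; first exact: H.
  by move=> e; apply/esym/H.
move/eqP; rewrite eq_sym eqn_mod_dvd ?leq_mul2l ?ij ?orbT // -mulnBr Gauss_dvdr;
  last by rewrite coprime_sym.
move=> d; case: (posnP (j - i)) => [z|pos]; first by lia.
by have := dvdn_leq pos d; lia.
Qed.

Lemma walk_uniq m Hm s l : coprime s m -> uniq (@walk m Hm s l).
Proof.
move=> cop; rewrite map_inj_in_uniq ?iota_uniq // => i j.
rewrite !mem_iota /= !add0n => im jm /(f_equal (fun p : Lvert m => (p.1 : nat))) /= e.
exact: mod_inj cop im jm e.
Qed.

Lemma walk_mem m Hm s l (x : Lvert m) : coprime s m ->
  (x \in @walk m Hm s l) = (x.2 == l x.1).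
Proof.
move=> cop; apply/idP/idP.
  by case/mapP => k _ ->.
move=> /eqP e.
set r := [seq om Hm (s * k) | k <- iota 0 m].
have ur : uniq r.
  rewrite map_inj_in_uniq ?iota_uniq // => i j.
  rewrite !mem_iota /= !add0n => im jm /(f_equal (@nat_of_ord m)) /= ee.
  exact: mod_inj cop im jm ee.
have [_ /(_ x.1)] := uniq_min_size ur (s2 := enum 'I_m) (fun y _ => mem_enum _ y)
  ltac:(by rewrite size_enum_ord size_map size_iota).
rewrite mem_enum inE => /mapP [k km ek].
apply/mapP; exists k => //.
by rewrite [x]surjective_pairing e ek.
Qed.

Lemma walk_next m Hm s l (x : Lvert m) : coprime s m -> x \in @walk m Hm s l ->
  next (@walk m Hm s l) x = (om Hm (x.1 + s), l ((x.1 + s) %% m)).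
Proof.
move=> cop xw.
have ix : index x (walk Hm s l) < m by rewrite -[X in _ < X](walk_size Hm s l) index_mem.
rewrite -{1}(nth_index x xw) next_nth_uniq ?walk_uniq ?walk_size //.
have m0 : 0 < m by exact: Hm.
rewrite walk_nth ?ltn_pmod //.
have ex : x = nth x (walk Hm s l) (index x (walk Hm s l)) by rewrite nth_index.
rewrite [in RHS]ex walk_nth //=.
have e : (s * ((index x (walk Hm s l)).+1 %% m)) %% m = ((s * (index x (walk Hm s l))) %% m + s) %% m.
  by rewrite modnMmr modnDml mulnSr.
by congr pair; [apply: val_inj => /=|]; rewrite e.
Qed.

Lemma walk_cycle m Hm s l : coprime s m -> (s = 1 \/ s = 3) ->
  cycle (@Larc m) (@walk m Hm s l).
Proof.
move=> cop hs; apply: cycle_from_next => [|x xw]; first exact: walk_uniq. rewrite (walk_next cop xw) /Larc /=.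
by case: hs => ->; rewrite eqxx ?orbT.
Qed.

Lemma walk_arcs m Hm s l (p : Lvert m * Lvert m) : coprime s m ->
  (p \in dicycle_arcs (@walk m Hm s l)) =
  (p.1.2 == l p.1.1) && (p.2 == (om Hm (p.1.1 + s), l ((p.1.1 + s) %% m))).
Proof.
move=> cop; rewrite inE -(walk_mem Hm l p.1 cop).
by case: (boolP (p.1 \in _)) => //= h; rewrite walk_next.
Qed.

Definition col (a : nat) : nat := if a < 5 then nth 0 [:: 2; 0; 2; 1; 2] a else a %% 2.

Lemma col_lt3 a : col a < 3.
Proof.
rewrite /col; case: ifP => h; last by lia.
by move: a h => [|[|[|[|[|//]]]]].
Qed.

Lemma col_big a : 5 <= a -> col a = a %% 2.
Proof. by move=> h; rewrite /col ltnNge h. Qed.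

Lemma modn_sub m x : m <= x -> x < 2 * m -> x %% m = x - m.
Proof.
move=> h1 h2; rewrite -{1}(subnK h1) modnDr modn_small //; lia.
Qed.

Lemma col_ok m a : 9 <= m -> odd m -> a < m ->
  col a != col ((a + 1) %% m) /\ col a != col ((a + 3) %% m).
Proof.
move=> m9 om am.
case: (ltnP a 5) => a5.
  rewrite !modn_small; try lia.
  have : a = 0 \/ a = 1 \/ a = 2 \/ a = 3 \/ a = 4 by lia.
  by case=> [|[|[|[|]]]] ->; rewrite /col /=.
case: (ltnP (a + 3) m) => a3.
  rewrite !modn_small; try lia.
  rewrite !col_big; try lia.
rewrite [col a]col_big; last by lia.
have : a = m - 3 \/ a = m - 2 \/ a = m - 1 by lia.
case=> [|[|]] ea.
- rewrite (modn_small (_ : a + 1 < m)); last by lia.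
  rewrite (@modn_sub m (a + 3)); try lia.
  have -> : a + 3 - m = 0 by lia.
  rewrite col_big; last by lia.
  split; [lia | rewrite /col /=; lia].
- rewrite (modn_small (_ : a + 1 < m)); last by lia.
  rewrite (@modn_sub m (a + 3)); try lia.
  have -> : a + 3 - m = 1 by lia.
  rewrite col_big; last by lia.
  split; [lia | rewrite /col /=; lia].
- have -> : (a + 1) %% m = 0 by rewrite (_ : a + 1 = m) ?modnn //; lia.
  rewrite (@modn_sub m (a + 3)); try lia.
  have -> : a + 3 - m = 2 by lia.
  split; rewrite /col /=; lia.
Qed.

Lemma step13 m a : 4 <= m -> a < m -> (a + 1) %% m != (a + 3) %% m.
Proof.
move=> m4 am.
case: (ltnP (a + 3) m) => a3.
  by rewrite !modn_small; lia.
rewrite (modn_sub (x := a + 3)); try lia.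
case: (ltnP (a + 1) m) => a1.
  by rewrite modn_small; lia.
by rewrite modn_sub; lia.
Qed.

Definition fc (i c : nat) : bool := if i == 0 then true else c == i.-1.

Lemma K1 x y i j : x < 3 -> y < 3 -> x != y -> i < 4 -> j < 4 ->
  fc i x = fc j x -> fc i y = fc j y -> i = j.
Proof.
by move: x y i j => [|[|[|//]]] [|[|[|//]]] // [|[|[|[|//]]]] [|[|[|[|//]]]].
Qed.

Lemma K2 x y b1 b2 : x < 3 -> y < 3 -> x != y ->
  exists2 i, i < 4 & fc i x = b1 /\ fc i y = b2.
Proof.
move: x y => [|[|[|//]]] [|[|[|//]]] // _ _ _; case: b1; case: b2;
 by [exists 0 | exists 1 | exists 2 | exists 3].
Qed.
Lemma dicycle_all1 (m : nat) (c : seq (Lvert m)) :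
  5 <= m -> odd m -> 3 %| m -> is_dicycle (@Larc m) m c ->
  forall x, x \in c -> ((next c x).1 : nat) = (x.1 + 1) %% m.
Proof.
move=> m5 om m3 [Sc Uc Cc] x xc.
set u := fun i => nth x c (i %% m).
set b := fun i => ((u i.+1).1 : nat) != ((u i).1 + 1) %% m.
have m0 : 0 < m by lia.
have nextu i : next c (u i) = u i.+1.
  rewrite /u next_nth_uniq // ?Sc ?ltn_pmod //.
  by rewrite -addn1 modnDml addn1.
have step i : ((u i.+1).1 : nat) = ((u i).1 + 1 + 2 * b i) %% m.
  have : Larc (u i) (u i.+1).
    rewrite -nextu; apply: next_cycle Cc _; by rewrite mem_nth // Sc ltn_pmod.
  rewrite /b /Larc; case: eqP => [->|_] /=; first by rewrite muln0 addn0.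
  by move=> /eqP ->; rewrite muln1 -addnA.
have pos i : ((u i).1 : nat) = ((u 0).1 + i + 2 * count b (iota 0 i)) %% m.
  elim: i => [|i IH]; first by rewrite /= !addn0 modn_small.
  rewrite step IH -addnA modnDml. rewrite -[i.+1]addn1 iotaD count_cat /= addn0.
  congr (_ %% m); rewrite add0n; lia.
have um : u m = u 0 by rewrite /u modnn mod0n.
set C := count b (iota 0 m).
have dC : m %| C.
  have h := pos m; rewrite um in h.
  have : ((u 0).1 + 2 * C) %% m = ((u 0).1 + 0) %% m.
    rewrite -/C in h; have h' : (u 0).1 + m + 2 * C = ((u 0).1 + 2 * C) + m by lia.
    rewrite h' modnDr in h; by rewrite addn0 -h modn_small.
  move/eqP; rewrite eqn_modDl mod0n -/(dvdn _ _) Gauss_dvdr //.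
  by rewrite coprimen2.
have Cle : C <= m by rewrite /C -{2}(size_iota 0 m) count_size.
have ix : index x c < m by rewrite -[X in _ < X]Sc index_mem.
have ux : u (index x c) = x by rewrite /u modn_small // nth_index.
have [C0|Cpos] := posnP C.
  have : ~~ has b (iota 0 m) by rewrite has_count -/C C0.
  move/hasPn/(_ (index x c)); rewrite mem_iota /= => /(_ ix).
  rewrite /b ux -nextu ux negbK => /eqP ->; done.
have CM : C = m by apply/eqP; rewrite eqn_leq Cle dvdn_leq.
have allb : all b (iota 0 m) by rewrite all_count size_iota -/C CM.
have pos3 i : i <= m -> ((u i).1 : nat) = ((u 0).1 + 3 * i) %% m.
  move=> im; rewrite pos; congr (_ %% m).
  have -> : count b (iota 0 i) = i.
    rewrite -[RHS](size_iota 0 i) -count_predT; apply: eq_in_count => k.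
    rewrite mem_iota /= => ki; apply: (allP allb); rewrite mem_iota /=; lia.
  lia.
case/dvdnP: m3 => q mq.
have q0 : 0 < q by lia.
have e1 : ((u q).1 : nat) = (u 0).1.
  rewrite pos3; last by lia.
  have -> : 3 * q = m by lia.
  by rewrite modnDr modn_small.
have e2 : ((u (2 * q)).1 : nat) = (u 0).1.
  rewrite pos3; last by lia.
  have -> : 3 * (2 * q) = 2 * m by lia.
  by rewrite addnC modnMDl modn_small.
have uinj i j : i < m -> j < m -> u i = u j -> i = j.
  move=> im jm; rewrite /u !modn_small // => /eqP; rewrite nth_uniq ?Sc //.
  by move/eqP.
have equ i j : ((u i).1 : nat) = (u j).1 -> (u i).2 = (u j).2 -> u i = u j.
  move=> h1 h2; rewrite [u i]surjective_pairing [u j]surjective_pairing h2.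
  by congr pair; apply: val_inj.
have : ((u 0).2 == (u q).2) || ((u 0).2 == (u (2 * q)).2) || ((u q).2 == (u (2 * q)).2).
  by case: (u 0).2; case: (u q).2; case: (u (2 * q)).2.
case/orP => [/orP[]|] /eqP h.
- by have := uinj 0 q m0 ltac:(lia) (equ _ _ (esym e1) h); lia.
- by have := uinj 0 (2 * q) m0 ltac:(lia) (equ _ _ (esym e2) h); lia.
- by have := uinj q (2 * q) ltac:(lia) ltac:(lia) (equ _ _ (etrans e1 (esym e2)) h); lia.
Qed.

Lemma suff_fact m : 13 <= m -> odd m -> ~~ (3 %| m) -> Ck_factorization (@Larc m) m.
Proof.
move=> m13 oddm m3.
have Hm : 0 < m by lia.
have c1 : coprime 1 m by rewrite coprime1n.
have c3 : coprime 3 m by rewrite prime_coprime.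
pose A (i : 'I_4) := walk Hm 1 (fun a => fc i (col a)).
pose B (i : 'I_4) := walk Hm 3 (fun a => ~~ fc i (col a)).
pose F (i : 'I_4) := \bigcup_(c <- [:: A i; B i]) dicycle_arcs c.
have memF i (e : Lvert m * Lvert m) : (e \in F i) =
   ((e.1.2 == fc i (col e.1.1)) && (e.2 == (om Hm (e.1.1 + 1), fc i (col ((e.1.1 + 1) %% m)))))
   || ((e.1.2 == ~~ fc i (col e.1.1)) &&
       (e.2 == (om Hm (e.1.1 + 3), ~~ fc i (col ((e.1.1 + 3) %% m))))).
  by rewrite /F big_cons big_cons big_nil setU0 in_setU !walk_arcs.
exists [set F i | i : 'I_4]; split.
- have nonempty : set0 \notin [set F i | i : 'I_4].
    apply/imsetP => [[i _ e]].
    set x : Lvert m := (om Hm 0, fc i (col (0 %% m))).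
    have : (x, next (A i) x) \in F i.
      rewrite /F big_cons in_setU; apply/orP; left; rewrite inE /= eqxx andbT.
      by rewrite walk_mem.
    by rewrite -e inE.
  have disj : {in predT &, forall i j : 'I_4, j != i -> [disjoint F i & F j]}.
    move=> i j _ _ ji; rewrite disjoints_subset; apply/subsetP => e; rewrite in_setC !memF => hi; apply/negP; move: hi.
    have am : (e.1.1 : nat) < m by [].
    have [d1 d3] := col_ok (m := m) (a := e.1.1) ltac:(lia) oddm am.
    have ci := col_lt3 e.1.1; have c1' := col_lt3 ((e.1.1 + 1) %% m);
    have c3' := col_lt3 ((e.1.1 + 3) %% m).
    have ij : (i : nat) <> j by move=> h; move/eqP: ji; apply; apply: val_inj.
    have s13 := step13 (m := m) (a := e.1.1) ltac:(lia) am.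
    case/orP => /andP [/eqP h1 /eqP h2]; case/orP => /andP [/eqP g1 /eqP g2].
    + apply: ij; apply: (K1 ci c1' d1) => //.
        by rewrite -h1 -g1.
      by move: h2; rewrite g2 => [[]] ->.
    + by move: h2; rewrite g2 => /(f_equal (fun p : Lvert m => (p.1 : nat))) /= h; rewrite h eqxx in s13.
    + by move: h2; rewrite g2 => /(f_equal (fun p : Lvert m => (p.1 : nat))) /= h; rewrite h eqxx in s13.
    + apply: ij; apply: (K1 ci c3' d3) => //.
        by apply: negb_inj; rewrite -h1 -g1.
      by move: h2; rewrite g2 => [[]] /negb_inj ->.
  case: (trivIimset disj nonempty) => tP _.
  rewrite /partition cover_imset tP nonempty andbT.
  rewrite andbT; apply/eqP/setP => e; rewrite /arcset inE.
  apply/bigcupP/idP.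
  + case=> i _; rewrite memF => /orP[]/andP[_ /eqP ->] /=; by rewrite /Larc /= eqxx ?orbT.
  + have am : (e.1.1 : nat) < m by [].
    have [d1 d3] := col_ok (m := m) (a := e.1.1) ltac:(lia) oddm am.
    have ci := col_lt3 e.1.1; have c1' := col_lt3 ((e.1.1 + 1) %% m);
    have c3' := col_lt3 ((e.1.1 + 3) %% m).
    rewrite /Larc => /orP [] /eqP h.
    * have [i i4 [fi1 fi2]] := K2 e.1.2 e.2.2 ci c1' d1.
      exists (Ordinal i4) => //; rewrite memF; apply/orP; left.
      rewrite /= fi1 eqxx /=; apply/eqP; rewrite [e.2]surjective_pairing fi2.
      by congr pair; apply: val_inj; rewrite /= h.
    * have [i i4 [fi1 fi2]] := K2 (~~ e.1.2) (~~ e.2.2) ci c3' d3.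
      exists (Ordinal i4) => //; rewrite memF; apply/orP; right.
      rewrite /= fi1 negbK eqxx /=; apply/eqP; rewrite [e.2]surjective_pairing fi2 negbK.
      by congr pair; apply: val_inj; rewrite /= h.
- move=> F0 /imsetP [i _ ->]; exists [:: A i; B i]; split => //.
  + move=> c; rewrite !inE => /orP[]/eqP ->; split;
      rewrite ?walk_size ?walk_uniq ?walk_cycle //; by [left | right].
  + move=> v; rewrite /= !walk_mem //; by case: v.2; case: fc.
Qed.

Lemma bigcup_seq_mem (T : finType) (I : eqType) (cs : seq I) (G : I -> {set T}) x :
  x \in \bigcup_(c <- cs) G c -> exists2 c, c \in cs & x \in G c.
Proof.
elim: cs => [|c cs IH]; first by rewrite big_nil inE.
rewrite big_cons in_setU => /orP [h|/IH [c' h1 h2]].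
  by exists c; rewrite ?inE ?eqxx.
by exists c'; rewrite // inE h1 orbT.
Qed.

Theorem mainTheorem4 (m : nat) (Hm : 13 <= m) (Hodd : odd m) :
  Ck_factorization (@Larc m) m <-> ~~ (3 %| m).
Proof.
split; last exact: suff_fact.
case=> P [hP hF]; apply/negP => m3.
have m0 : 0 < m by lia.
have m3' : 3 < m by lia.
set e : Lvert m * Lvert m := ((Ordinal m0, false), (Ordinal m3', false)).
have ea : e \in arcset (@Larc m).
  by rewrite inE /Larc /= add0n (modn_small m3') eqxx orbT.
case/and3P: hP => /eqP hc _ _.
move: ea; rewrite -hc => /bigcupP [F FP eF].
have [cs [hcs _ eF']] := hF F FP.
move: eF; rewrite eF' => /bigcup_seq_mem [c cin ec].
have hd := hcs c cin.
move: ec; rewrite inE /= => /andP [e1c /eqP e2].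
have := dicycle_all1 (m := m) ltac:(lia) Hodd m3 hd e1c.
rewrite -e2 /= add0n modn_small //; lia.
Qed.
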